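(* Fix $n<\omega$ and assume that for every finite quasi-order $P$ the quasi-order $i^F_{\omega^n}(P)$ is a well-quasi-order. Then for every quasi-order $Q$ the following hold. (1) Every $\sigma\in s^F_{=\omega^n}(Q)$ either lies in $i^F_{=\omega^n}(Q)$, or can be written as a concatenation $\sigma=\sigma_0+\sigma_1$ with $\sigma_0\in s^F_{\omega^n}(Q)$ and $\sigma_1\in i^F_{=\omega^n}(Q)$. (2) Every $\sigma\in s^F_{\omega^{n+1}}(Q)$ can be written as a finite concatenation $\sigma_0+\sigma_1+\cdots+\sigma_{k-1}$ with $\sigma_i\in i^F_{\omega^{n+1}}(Q)$ for all $i<k$.
   Context: A well-quasi-order is a quasi-order in which every infinite sequence $(x_i)_{i<\omega}$ has $i<j$ with $x_i\le x_j$. Sequences: a transfinite sequence over $Q$ of length $\alpha$ (with $\alpha\ne0$ an ordinal) is a function $\sigma:\alpha\to Q$, and $|\sigma|=\alpha$; the empty sequence is excluded. Define $\sigma\preceq\tau$ if there is a strictly increasing $f:|\sigma|\to|\tau|$ with $\sigma(i)\le_Q\tau(f(i))$ for all $i$. The concatenation $\sigma+\tau$ has length $|\sigma|+|\tau|$: it equals $\sigma(\iota)$ for $\iota<|\sigma|$ and $\tau(-|\sigma|+\iota)$ for $|\sigma|\le\iota<|\sigma|+|\tau|$. Finite range means the sequence takes finitely many values. A proper tail of $\sigma$ is $i\mapsto\sigma(\delta+i)$ for some $0<\delta<|\sigma|$. The sequence $\sigma$ is indecomposable if it embeds into each of its proper tails. Notation: - $s^F_\alpha(Q)$: finite-range sequences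 of length $<\alpha$; - $i^F_\alpha(Q)$: the indecomposable elements of $s^F_\alpha(Q)$; - $s^F_{=\alpha}(Q)$ and $i^F_{=\alpha}(Q)$: the sequences of length exactly $\alpha$ in $s^F_{\alpha+1}(Q)$ and $i^F_{\alpha+1}(Q)$, respectively. All are ordered by $\preceq$. *)

(* Defs.v *)
From mathcomp Require Import all_boot.
From Stdlib Require List.
Set Implicit Arguments. Unset Strict Implicit. Unset Printing Implicit Defensive.

(* An ordinal < omega^omega is represented by the nonincreasing list of
   exponents of its Cantor normal form: [:: e1; ...; ek] stands for
   omega^e1 + ... + omega^ek with e1 >= ... >= ek.  [::] is 0. *)
Definition cnf (a : seq nat) : bool := sorted geq a.

(* strict ordinal order = lexicographic order on CNF lists *)
Fixpoint olt (a b : seq nat) : bool :=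
  match a, b with
  | [::], [::] => false
  | [::], _ :: _ => true
  | _ :: _, [::] => false
  | x :: a', y :: b' => (x < y) || ((x == y) && olt a' b')
  end.

Definition oadd (a b : seq nat) : seq nat :=
  match b with
  | [::] => a
  | y :: _ => [seq x <- a | y <= x] ++ b
  end.

Definition oexp (n : nat) : seq nat := [:: n].

Definition inlen (a i : seq nat) : bool := cnf i && olt i a.

(* transfinite sequence over Q: a length (ordinal) and a function on positions;
   only positions below the length are meaningful. *)
Record tseq (Q : Type) := TSeq { tlen : seq nat; tval : seq nat -> Q }.

Definition wf Q (s : tseq Q) : Prop := cnf (tlen s) /\ tlen s <> [::].

Definition finite_range Q (s : tseq Q) : Prop :=
  exists l : list Q, forall i, inlen (tlen s) i -> List.In (tval s i) l.

Definition embeds Q (le : Q -> Q -> Prop) (s t : tseq Q) : Prop :=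
  exists f : seq nat -> seq nat,
    [/\ forall i, inlen (tlen s) i -> inlen (tlen t) (f i),
        forall i j, inlen (tlen s) i -> inlen (tlen s) j -> olt i j -> olt (f i) (f j)
      & forall i, inlen (tlen s) i -> le (tval s i) (tval t (f i))].

Definition indecomposable Q (le : Q -> Q -> Prop) (s : tseq Q) : Prop :=
  forall d g, cnf d -> cnf g -> d <> [::] -> g <> [::] -> oadd d g = tlen s ->
    embeds le s (TSeq g (fun i => tval s (oadd d i))).

Definition sF Q (alpha : seq nat) (s : tseq Q) : Prop :=
  wf s /\ olt (tlen s) alpha /\ finite_range s.
Definition iF Q (le : Q -> Q -> Prop) (alpha : seq nat) (s : tseq Q) : Prop :=
  sF alpha s /\ indecomposable le s.
Definition sFeq Q (alpha : seq nat) (s : tseq Q) : Prop :=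
  wf s /\ tlen s = alpha /\ finite_range s.
Definition iFeq Q (le : Q -> Q -> Prop) (alpha : seq nat) (s : tseq Q) : Prop :=
  sFeq alpha s /\ indecomposable le s.

Definition concat_eq Q (s s0 s1 : tseq Q) : Prop :=
  [/\ tlen s = oadd (tlen s0) (tlen s1),
      forall i, inlen (tlen s0) i -> tval s i = tval s0 i
    & forall g, inlen (tlen s1) g -> tval s (oadd (tlen s0) g) = tval s1 g].

Definition tseq_equiv Q (s t : tseq Q) : Prop :=
  tlen s = tlen t /\ forall i, inlen (tlen s) i -> tval s i = tval t i.

Fixpoint concat_list Q (s : tseq Q) (ss : list (tseq Q)) : Prop :=
  match ss with
  | nil => False
  | cons s0 ss' =>
      match ss' with
      | nil => tseq_equiv s s0
      | cons _ _ => exists t, wf t /\ concat_eq s s0 t /\ concat_list t ss'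
      end
  end.

Definition quasi_order T (le : T -> T -> Prop) : Prop :=
  (forall x, le x x) /\ (forall x y z, le x y -> le y z -> le x z).

Definition wqo_on X (R : X -> X -> Prop) (A : X -> Prop) : Prop :=
  forall x : nat -> X, (forall k, A (x k)) -> exists i j, i < j /\ R (x i) (x j).

(* Main.v *)
Require Import Defs.
From mathcomp Require Import all_boot.
From Stdlib Require List.
From mathcomp Require Import zify.
From Stdlib Require Import ClassicalEpsilon Classical.
Set Implicit Arguments. Unset Strict Implicit. Unset Printing Implicit Defensive.

Lemma olt_irr a : olt a a = false.
Proof. by elim: a => //= x a IH; rewrite ltnn eqxx IH. Qed.

Lemma olt_trans a b c : olt a b -> olt b c -> olt a c.
Proof.
elim: a b c => [|x a IH] [|y b] [|z c] //=.
case/orP=> [xy|/andP[/eqP<- ab]]; case/orP=> [yz|/andP[/eqP<- bc]].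
- by rewrite (ltn_trans xy yz).
- by rewrite xy.
- by rewrite yz.
- by rewrite eqxx (IH _ _ ab bc) orbT.
Qed.

Lemma olt_total a b : a <> b -> olt a b || olt b a.
Proof.
elim: a b => [|x a IH] [|y b] //=.
case: (ltngtP x y) => //= exy; subst y => neq.
apply: IH => E; apply: neq; by rewrite E.
Qed.

Lemma olt_nil_r a : olt a [::] = false.
Proof. by case: a. Qed.

Lemma olt_nil_l b : olt [::] b = (b != [::]).
Proof. by case: b. Qed.

Lemma olt_asym a b : olt a b -> ~~ olt b a.
Proof. move=> ab; apply/negP=> ba; by have := olt_trans ab ba; rewrite olt_irr. Qed.

Lemma oleP a b : ~~ olt b a -> a = b \/ olt a b.
Proof.
move=> h; case: (@eqP _ a b) => [->|ne]; first by left.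
by right; move: (olt_total ne); rewrite (negbTE h) orbF.
Qed.

Lemma olt_le_trans a b c : olt a b -> ~~ olt c b -> olt a c.
Proof. by move=> ab /oleP [<-|bc] //; apply: olt_trans ab bc. Qed.

Lemma ole_lt_trans a b c : ~~ olt b a -> olt b c -> olt a c.
Proof. by move=> /oleP [->|ab] bc //; apply: olt_trans ab bc. Qed.

Lemma ole_trans a b c : ~~ olt b a -> ~~ olt c b -> ~~ olt c a.
Proof.
move=> /oleP [->|ab] // bc; apply: olt_asym; exact: olt_le_trans ab bc.
Qed.

Lemma olt_ole a b : olt a b -> ~~ olt b a.
Proof. exact: olt_asym. Qed.

Lemma olt_single L x : olt L [:: x] = (L == [::]) || (head 0 L < x).
Proof. case: L => //= y L; by rewrite olt_nil_r andbF orbF. Qed.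

Lemma cnf_tail x a : cnf (x :: a) -> cnf a.
Proof. exact: path_sorted. Qed.

Lemma cnf_all x a : cnf (x :: a) -> all (fun y => y <= x) a.
Proof. move=> h; have := order_path_min _ h; apply; move=> p q r /= ? ?; lia. Qed.

Lemma cnf_consI z s : cnf s -> all (fun w => w <= z) s -> cnf (z :: s).
Proof. by case: s => //= w s -> /andP[-> _]. Qed.

Lemma cnf_nseq k m : cnf (nseq k m).
Proof. elim: k => //= k IH; apply: cnf_consI => //; apply/allP=> x /nseqP[-> _] /=; lia. Qed.

Lemma all_filter_sub (p q : pred nat) s : all p s -> all p (filter q s).
Proof. elim: s => //= x s IH /andP[px ps]; case: (q x) => /=; rewrite ?px IH //. Qed.

Lemma filter_nil_all (y : nat) a : all (fun z => z < y) a -> filter (fun x => y <= x) a = [::].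
Proof. elim: a => //= x a IH /andP[xy ha]; rewrite IH //; case: ifP => //; lia. Qed.

Lemma cnf_oadd a b : cnf a -> cnf b -> cnf (oadd a b).
Proof.
case: b => [//|y b] ha hb /=.
elim: a ha => [//|z a IH] ha /=.
have az := cnf_all ha; have ha' := cnf_tail ha.
case: ifP => yz.
- apply: cnf_consI; first exact: IH.
  rewrite all_cat (all_filter_sub _ az) /= yz /=.
  apply: sub_all (cnf_all hb) => w /= wy; lia.
- rewrite filter_nil_all //; apply: sub_all az => w /=; lia.
Qed.

Lemma oadd_nil_l b : oadd [::] b = b.
Proof. by case: b. Qed.

Lemma oaddA a b c : cnf b -> oadd (oadd a b) c = oadd a (oadd b c).
Proof.
case: c => [//|z c]; case: b => [|y b] hb; first by [].
rewrite /oadd filter_cat /= -/(oadd a _).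
have hby := cnf_all hb.
case: (leqP z y) => zy.
- rewrite /= -catA /=; congr (_ ++ _).
  rewrite -filter_predI; apply: eq_filter => x /=; apply/idP/idP; first by case/andP.
  by move=> yx; rewrite yx andbT; move: yx; lia.
- rewrite (@filter_nil_all z b); last by apply: sub_all hby => w /=; lia.
  rewrite cats0 /= -filter_predI; congr (_ ++ _); apply: eq_filter => x /=.
  apply/idP/idP; first by case/andP. move=> zx; rewrite zx /=; lia.
Qed.

Lemma olt_oadd2 a i b : cnf a -> olt i b -> olt (oadd a i) (oadd a b).
Proof.
case: b => [|y b]; first by rewrite olt_nil_r.
elim: a i => [|z a IH] i ha hib; first by rewrite !oadd_nil_l.
have az := cnf_all ha; have ha' := cnf_tail ha.
case: i hib IH => [|x i] hib IH.
- rewrite /=.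
  case: ifP => yz /=.
  + by rewrite ltnn eqxx /=; apply: (IH [::] ha' hib).
  + rewrite filter_nil_all /=; first by rewrite ltnNge yz.
    apply: sub_all az => w /=; move: yz; lia.
- move: (IH _ ha' hib) => /= IH'.
  have xy : x <= y by move: hib => /= /orP[|/andP[/eqP->]] //; lia.
  case: (leqP y z) => yz.
  + have xz : x <= z by lia.
    by rewrite xz /= ltnn eqxx /= IH'.
  + rewrite (@filter_nil_all y a); last by apply: sub_all az => w /=; lia.
    rewrite /=; case: ifP => xz /=.
    * by rewrite yz.
    * rewrite filter_nil_all //; apply: sub_all az => w /=; lia.
Qed.

Lemma olt_oadd_l a b : cnf a -> b <> [::] -> olt a (oadd a b).
Proof.
move=> ha hb; have := @olt_oadd2 a [::] b ha; rewrite olt_nil_l.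
by move=> h; apply: h; apply/eqP.
Qed.

Lemma ole_oadd_l a b : cnf a -> ~~ olt (oadd a b) a.
Proof.
move=> ha; case: b => [|y b]; first by rewrite olt_irr.
by apply: olt_asym; apply: olt_oadd_l.
Qed.

Lemma oadd_lt_cancel a x y : cnf a -> olt (oadd a x) (oadd a y) -> olt x y.
Proof.
move=> ha h; case: (@eqP _ x y) => [E|ne]; first by subst; rewrite olt_irr in h.
case/orP: (olt_total ne) => // yx.
by have := olt_asym (olt_oadd2 ha yx); rewrite h.
Qed.

Lemma oadd_inj a x y : cnf a -> oadd a x = oadd a y -> x = y.
Proof.
move=> ha E; case: (@eqP _ x y) => // ne.
by case/orP: (olt_total ne) => h; have := olt_oadd2 ha h; rewrite E olt_irr.
Qed.

Lemma ole_oadd2 a x y : cnf a -> ~~ olt y x -> ~~ olt (oadd a y) (oadd a x).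
Proof. by move=> ha /oleP [->|h]; [rewrite olt_irr | apply/olt_asym/olt_oadd2]. Qed.

Fixpoint osub (c a : seq nat) : seq nat :=
  match a, c with
  | [::], _ => c
  | _ :: _, [::] => [::]
  | z :: a', w :: c' => if w == z then osub c' a' else c
  end.

Lemma osubK a c : cnf a -> cnf c -> ~~ olt c a -> cnf (osub c a) /\ oadd a (osub c a) = c.
Proof.
elim: a c => [|z a IH] [|w c] //= ha hc => //=.
move=> H; have zw : z <= w by move: H; case: ltnP.
case: eqP => [E|ne].
- subst w; have h : ~~ olt c a by move: H; rewrite ltnn eqxx.
  have [he E] := IH c (cnf_tail ha) (cnf_tail hc) h.
  split => //.
  case Ee: (osub c a) E he => [|y e] E he; first by rewrite /= -E.
  have yz : y <= z.
    have := cnf_all hc; rewrite -E /= all_cat => /andP[_] /= /andP[] //.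
  by rewrite /= yz /= -E.
- have zlw : z < w by rewrite ltn_neqAle zw andbT; apply/eqP=> E; apply: ne; rewrite E.
  clear H; split => //; rewrite /= filter_nil_all /=.
    by rewrite leqNgt zlw.
  have := cnf_all ha; apply: sub_all => x /= xz; exact: leq_ltn_trans xz zlw.
Qed.

Lemma oadd_oexp p m : cnf p -> olt p [:: m] -> oadd p [:: m] = [:: m].
Proof.
case: p => [//|x p] hp; rewrite olt_single /= => xm.
rewrite /oadd filter_nil_all //=; first by rewrite leqNgt xm.
apply: sub_all (cnf_all hp) => w /= wx; exact: leq_ltn_trans wx xm.
Qed.

Lemma oadd_single e L : cnf (e :: L) -> oadd [:: e] L = e :: L.
Proof. case: L => [//|y L] h; have := cnf_all h => /= /andP[-> _] //. Qed.

Lemma inlen_oadd a i b : cnf a -> inlen b i -> inlen (oadd a b) (oadd a i).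
Proof. by move=> ha /andP[hi ib]; rewrite /inlen cnf_oadd // olt_oadd2. Qed.

Lemma oadd_nseq k m : oadd (nseq k m) [:: m] = nseq k.+1 m.
Proof. elim: k => //= k IH; rewrite leqnn /=; by move: IH => /= ->. Qed.

Lemma olt_nseq_bound q m : cnf q -> olt q [:: m.+1] -> olt q (nseq (size q).+1 m).
Proof.
elim: q => [//|x q IH] hq; rewrite olt_single /= => xm.
case: (ltngtP x m) => xm'.
- by [].
- by move: xm; rewrite ltnS leqNgt xm'.
subst x; rewrite /=; apply: IH; first exact: cnf_tail hq.
have := cnf_all hq; rewrite olt_single; case: q {hq} => //= y q /andP[ym _].
by rewrite ltnS ym.
Qed.

Lemma nseq_mono K K' m : K <= K' -> ~~ olt (nseq K' m) (nseq K m).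
Proof.
elim: K K' => [|K IH] [|K'] //= h.
by rewrite ltnn eqxx /=; apply: IH.
Qed.

Lemma nseq_lt k m : olt (nseq k m) [:: m.+1].
Proof. by case: k => //= k; rewrite ltnSn. Qed.

Section Core.
Variable T : Type.
Variable le : T -> T -> Prop.
Variable f : seq nat -> T.

Definition piece a L : tseq T := TSeq L (fun i => f (oadd a i)).

Lemma st_lt (st ln : nat -> seq nat) : (forall j, cnf (st j)) ->
  (forall j, st j.+1 = oadd (st j) (ln j)) -> (forall j, ln j <> [::]) ->
  forall j j', j < j' -> olt (st j) (st j').
Proof.
move=> hc hs hn j; elim=> // j' IH; rewrite ltnS leq_eqVlt => /orP[/eqP->|jj].
  by rewrite hs; apply: olt_oadd_l.
apply: olt_trans (IH jj) _; rewrite hs; exact: olt_oadd_l.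
Qed.

Lemma st_le (st ln : nat -> seq nat) : (forall j, cnf (st j)) ->
  (forall j, st j.+1 = oadd (st j) (ln j)) -> (forall j, ln j <> [::]) ->
  forall j j', j <= j' -> ~~ olt (st j') (st j).
Proof.
move=> hc hs hn j j'; rewrite leq_eqVlt => /orP[/eqP->|jj]; first by rewrite olt_irr.
exact/olt_asym/(st_lt hc hs hn).
Qed.

Lemma locate (st ln : nat -> seq nat) N X : (forall j, cnf (st j)) ->
  (forall j, st j.+1 = oadd (st j) (ln j)) -> (forall j, ln j <> [::]) ->
  ~~ olt X (st N) -> (exists j, olt X (st j)) ->
  exists k, ~~ olt X (st (N + k)) /\ olt X (st (N + k).+1).
Proof.
move=> hc hs hn XN exP.
case: (ex_minnP exP) => j0 Pj0 minj0.
have Nj0 : N < j0.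
  rewrite ltnNge; apply/negP=> jN.
  by have := olt_le_trans Pj0 (st_le hc hs hn jN); rewrite (negbTE XN).
exists (j0 - N.+1); have -> : (N + (j0 - N.+1)).+1 = j0 by lia.
split => //; apply/negP=> h; have := minj0 _ h; lia.
Qed.

Section Omega.
Variables (st ln : nat -> seq nat) (E L : seq nat) (N : nat).
Hypothesis hcs : forall j, cnf (st j).
Hypothesis hcl : forall j, cnf (ln j).
Hypothesis hs : forall j, st j.+1 = oadd (st j) (ln j).
Hypothesis hn : forall j, ln j <> [::].
Hypothesis hE : forall j, olt (st j) E.
Hypothesis hcof : forall x, cnf x -> olt x E -> exists j, olt x (st j).
Hypothesis hL : cnf L.
Hypothesis hNL : oadd (st N) L = E.
Hypothesis good : forall i, N <= i -> forall M, exists j, M <= j /\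
   embeds le (piece (st i) (ln i)) (piece (st j) (ln j)).

Lemma omega_ind : indecomposable le (piece (st N) L).
Proof.
move=> d g hd hg dn gn /= Edg.
set c := oadd (st N) d.
have hc : cnf c by apply: cnf_oadd.
have cE : olt c E.
  rewrite -hNL -Edg; apply: olt_oadd2 => //; exact: olt_oadd_l.
have [M cM] := hcof hc cE.
have good' : forall i Mb, exists j, Mb <= j /\ (N <= i ->
   embeds le (piece (st i) (ln i)) (piece (st j) (ln j))).
  move=> i Mb; case: (leqP N i) => Ni.
    by have [j [? ?]] := good Ni Mb; exists j.
  by exists Mb.
pose pick i Mb := proj1_sig (constructive_indefinite_description _ (good' i Mb)).
have pickP : forall i Mb, Mb <= pick i Mb /\ (N <= i ->
   embeds le (piece (st i) (ln i)) (piece (st (pick i Mb)) (ln (pick i Mb)))).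
  move=> i Mb; exact: (proj2_sig (constructive_indefinite_description _ (good' i Mb))).
pose h := fix h k := match k with 0 => pick N M | k'.+1 => pick (N + k'.+1) (h k').+1 end.
have hM : M <= h 0 by have [] := pickP N M.
have hinc : forall k, h k < h k.+1.
  by move=> k; have [] := pickP (N + k.+1) (h k).+1.
have hmono : forall k k', k < k' -> h k < h k'.
  move=> k; elim=> // k' IH; rewrite ltnS leq_eqVlt => /orP[/eqP->|kk] //.
  exact: ltn_trans (IH kk) (hinc k').
have hMk : forall k, M <= h k.
  elim=> // k IH; apply: leq_trans IH _; exact: ltnW.
have Hemb : forall k, embeds le (piece (st (N + k)) (ln (N + k))) (piece (st (h k)) (ln (h k))).
  case=> [|k]; first by rewrite addn0; have [_ H] := pickP N M; apply: H.
  by have [_ H] := pickP (N + k.+1) (h k).+1; apply: H; rewrite leq_addr.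
pose phi k := proj1_sig (constructive_indefinite_description _ (Hemb k)).
have phiP : forall k, let F := phi k in
   [/\ forall i, inlen (ln (N + k)) i -> inlen (ln (h k)) (F i),
       forall i j, inlen (ln (N + k)) i -> inlen (ln (N + k)) j -> olt i j -> olt (F i) (F j)
     & forall i, inlen (ln (N + k)) i -> le (f (oadd (st (N + k)) i)) (f (oadd (st (h k)) (F i)))].
  move=> k; exact: (proj2_sig (constructive_indefinite_description _ (Hemb k))).
have Jx : forall x, exists k, inlen L x ->
   ~~ olt (oadd (st N) x) (st (N + k)) /\ olt (oadd (st N) x) (st (N + k).+1).
  move=> x; case: (boolP (inlen L x)) => [/andP[hx xL]|_]; last by exists 0.
  have XE : olt (oadd (st N) x) E by rewrite -hNL; apply: olt_oadd2.
  have [k Hk] := locate hcs hs hn (ole_oadd_l _ (hcs N)) (hcof (cnf_oadd (hcs N) hx) XE).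
  by exists k.
pose J x := proj1_sig (constructive_indefinite_description _ (Jx x)).
have JP : forall x, inlen L x -> ~~ olt (oadd (st N) x) (st (N + J x)) /\ olt (oadd (st N) x) (st (N + J x).+1).
  move=> x; exact: (proj2_sig (constructive_indefinite_description _ (Jx x))).
pose xp x := osub (oadd (st N) x) (st (N + J x)).
pose Y x := oadd (st (h (J x))) (phi (J x) (xp x)).
have key : forall x, inlen L x ->
  [/\ inlen (ln (N + J x)) (xp x), oadd (st (N + J x)) (xp x) = oadd (st N) x,
      cnf (Y x), olt (Y x) (st (h (J x)).+1) & ~~ olt (Y x) (st (h (J x)))].
  move=> x Lx; have [J1 J2] := JP x Lx.
  have /andP[hx _] := Lx.
  have [hxp Exp] := osubK (hcs _) (cnf_oadd (hcs N) hx) J1.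
  have xpl : inlen (ln (N + J x)) (xp x).
    rewrite /inlen hxp /=; apply: (@oadd_lt_cancel (st (N + J x))) => //.
    by rewrite Exp -hs.
  have [P1 _ _] := phiP (J x).
  have /andP[hph phl] := P1 _ xpl.
  split => //.
  - exact: cnf_oadd.
  - rewrite hs; exact: olt_oadd2.
  - exact: ole_oadd_l.
pose F x := osub (Y x) c.
have cY : forall x, inlen L x -> olt c (Y x).
  move=> x Lx; have [_ _ _ _ Y1] := key x Lx.
  apply: olt_le_trans Y1; apply: olt_le_trans cM _.
  apply: (st_le hcs hs hn); exact: hMk.
have FP : forall x, inlen L x -> cnf (F x) /\ oadd c (F x) = Y x.
  move=> x Lx; have [_ _ cYx _ _] := key x Lx.
  apply: osubK => //; exact: olt_asym (cY x Lx).
have YE : forall x, inlen L x -> olt (Y x) E.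
  move=> x Lx; have [_ _ _ Y2 _] := key x Lx; exact: olt_trans Y2 (hE _).
have Ymono : forall x y, inlen L x -> inlen L y -> olt x y -> olt (Y x) (Y y).
  move=> x y Lx Ly xy.
  have [K1 K2 _ K4 K5] := key x Lx; have [L1 L2 _ L4 L5] := key y Ly.
  have [Jx1 Jx2] := JP x Lx; have [Jy1 Jy2] := JP y Ly.
  have /andP[hx _] := Lx; have /andP[hy _] := Ly.
  have XY : olt (oadd (st N) x) (oadd (st N) y) by apply: olt_oadd2.
  case: (ltngtP (J x) (J y)) => JJ.
  - apply: (olt_le_trans (olt_le_trans K4 _) L5).
    by apply: (st_le hcs hs hn); exact: hmono.
  - exfalso.
    have : olt (oadd (st N) y) (st (N + J x)).
      apply: olt_le_trans Jy2 _; apply: (st_le hcs hs hn); by rewrite -addnS leq_add2l.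
    move=> h1; have := olt_trans XY h1; by rewrite (negbTE Jx1).
  - rewrite /Y JJ; apply: olt_oadd2 => //.
    have [_ P2 _] := phiP (J y).
    move: K1 K2; rewrite JJ => K1 K2.
    apply: P2 => //; apply: (@oadd_lt_cancel (st (N + J y))) => //.
    by rewrite K2 L2.
exists F; split.
- move=> x Lx; have [hF EF] := FP x Lx; rewrite /inlen hF /=.
  apply: (@oadd_lt_cancel c) => //; rewrite EF /c oaddA // Edg hNL; exact: YE.
- move=> x y Lx Ly xy; apply: (@oadd_lt_cancel c) => //.
  have [_ ->] := FP x Lx; have [_ ->] := FP y Ly; exact: Ymono.
- move=> x Lx /=.
  have [hF EF] := FP x Lx.
  rewrite -oaddA // -/c EF.
  have [K1 K2 _ _ _] := key x Lx.
  have [_ _ P3] := phiP (J x).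
  by have := P3 _ K1; rewrite K2.
Qed.
End Omega.

Fixpoint dec (b a c : seq nat) (Ls : seq (seq nat)) : Prop :=
  match Ls with
  | [::] => a = c
  | L :: Ls' => [/\ cnf L, L <> [::], olt L b, indecomposable le (piece a L)
                  & dec b (oadd a L) c Ls']
  end.

Lemma dec_cat b a c e L1 L2 : dec b a c L1 -> dec b c e L2 -> dec b a e (L1 ++ L2).
Proof.
elim: L1 a => [|L Ls IH] a /=; first by move->.
by case=> ? ? ? ? H H2; split => //; apply: IH.
Qed.

Lemma dec_mono b b' a c Ls : (forall L, olt L b -> olt L b') -> dec b a c Ls -> dec b' a c Ls.
Proof.
move=> hb; elim: Ls a => [|L Ls IH] a //=.
by case=> ? ? ? ? H; split => //; [apply: hb | apply: IH].
Qed.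

Lemma dec_lt b a c Ls : cnf a -> dec b a c Ls -> cnf c /\ (Ls <> [::] -> olt a c).
Proof.
elim: Ls a => [|L Ls IH] a ha /=; first by move=> <-.
case=> hL nL _ _ H; have [hc H2] := IH _ (cnf_oadd ha hL) H; split => // _.
case: Ls {IH} H H2 => [|L' Ls'] H H2.
  by move: H => /= <-; apply: olt_oadd_l.
by apply: olt_trans (H2 _) => //; apply: olt_oadd_l.
Qed.

Definition Ap m := forall a, cnf a -> exists p,
  [/\ cnf p, olt p [:: m] & indecomposable le (piece (oadd a p) [:: m])].
Definition Bp m := forall a L, cnf a -> cnf L -> olt L [:: m.+1] ->
  exists Ls, dec [:: m.+1] a (oadd a L) Ls.

Lemma A0 : Ap 0.
Proof.
move=> a ha; exists [::]; split => //.
move=> d g hd hg dn gn /= E; exfalso.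
case: g E gn hg => [//|y g] /= E _ _.
move: E; case Hf: (filter _ d) => [|z s] /= E.
- case: E => y0 _; subst y.
  by case: d hd dn Hf => [//|w d'] _ _ /=.
- case: E => _ /(f_equal size); by rewrite size_cat /= addnS.
Qed.

Lemma B_of_A m : (forall e, e <= m -> Ap e) -> (forall e, e < m -> Bp e) -> Bp m.
Proof.
move=> HA HB a L; elim: L a => [|e L IH] a ha hL hLm.
  by exists [::].
have em : e <= m by move: hLm; rewrite olt_single.
have [p [hp pe Hind]] := HA e em a ha.
have [Ls1 D1] : exists Ls1, dec [:: m.+1] a (oadd a p) Ls1.
  move: em pe Hind; case: e {hL hLm IH} => [|e'] em pe Hind.
  - move: pe; rewrite olt_single => /orP[/eqP->|] //; by exists [::].
  - have [Ls1 D1] := HB e' em a p ha hp pe; exists Ls1; apply: dec_mono D1.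
    move=> L'; rewrite !olt_single => /orP[->|h] //; apply/orP; right.
    apply: leq_trans (leq_trans h em) _; exact: leqnSn.
have he : cnf [:: e] by [].
have E1 : oadd (oadd a p) [:: e] = oadd a [:: e] by rewrite oaddA // oadd_oexp.
have Lm : olt L [:: m.+1].
  have := cnf_all hL; rewrite olt_single; case: L {hL IH hLm} => [//|y L] /= /andP[ye _].
  apply: leq_ltn_trans ye _; by rewrite ltnS.
have [Ls3 D3] := IH (oadd a [:: e]) (cnf_oadd ha he) (cnf_tail hL) Lm.
exists (Ls1 ++ ([:: [:: e]] ++ Ls3)).
apply: dec_cat D1 _; apply: (@dec_cat _ _ (oadd a [:: e])).
  by rewrite /=; split => //; rewrite ltnS em.
by move: D3; rewrite oaddA // oadd_single.
Qed.

Variable l : list T.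
Variable n : nat.
Hypothesis Hf : forall i, List.In (f i) l.
Hypothesis HW : forall x : nat -> tseq T, (forall k, iF le [:: n] (x k)) ->
  (forall k i, List.In (Defs.tval (x k) i) l) -> exists i j, i < j /\ embeds le (x i) (x j).

Lemma good_tail (x : nat -> tseq T) : (forall k, iF le [:: n] (x k)) ->
  (forall k i, List.In (Defs.tval (x k) i) l) ->
  exists N, forall i, N <= i -> forall M, exists j, M <= j /\ embeds le (x i) (x j).
Proof.
move=> H1 H2; apply: NNPP => Hneg.
have H3 : forall N, exists p : nat * nat, N <= p.1 /\ forall j, p.2 <= j -> ~ embeds le (x p.1) (x j).
  move=> N; apply: NNPP => H4; apply: Hneg; exists N => i Ni M; apply: NNPP => H5.
  apply: H4; exists (i, M); split => // j Mj Ej; apply: H5; by exists j.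
pose g N := proj1_sig (constructive_indefinite_description _ (H3 N)).
have gP : forall N, N <= (g N).1 /\ forall j, (g N).2 <= j -> ~ embeds le (x (g N).1) (x j).
  move=> N; exact: (proj2_sig (constructive_indefinite_description _ (H3 N))).
pose B := fix B t := match t with 0 => 0 | t'.+1 => maxn (g (B t')).2 (g (B t')).1.+1 end.
have BS : forall t, B t < B t.+1.
  move=> t; rewrite /= leq_max; apply/orP; right; rewrite ltnS; exact: (gP _).1.
have Bmono : forall t t', t <= t' -> B t <= B t'.
  move=> t; elim=> [|t' IH]; first by rewrite leqn0 => /eqP->.
  rewrite leq_eqVlt => /orP[/eqP->|] // tt; apply: leq_trans (IH tt) (ltnW (BS _)).
have [i [j [ij Eij]]] := HW (x := fun t => x (g (B t)).1) (fun k => H1 _) (fun k i => H2 _ _).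
have [_ Hi] := gP (B i); apply: (Hi (g (B j)).1) Eij.
apply: leq_trans (_ : B i.+1 <= _); first by rewrite /= leq_maxl.
apply: leq_trans (Bmono _ _ ij) (gP _).1.
Qed.

Lemma A_step m : m.+1 <= n -> Bp m -> Ap m.+1.
Proof.
move=> mn HB a ha.
pose pos k := oadd a (nseq k m).
have hpos : forall k, cnf (pos k) by move=> k; exact: cnf_oadd ha (cnf_nseq k m).
have posS : forall k, pos k.+1 = oadd (pos k) [:: m].
  by move=> k; rewrite /pos oaddA ?cnf_nseq // oadd_nseq.
have HL : forall k, exists Ls, dec [:: m.+1] (pos k) (pos k.+1) Ls.
  move=> k; rewrite posS; apply: HB => //; by rewrite olt_single /= ltnSn.
pose Lsf k := proj1_sig (constructive_indefinite_description _ (HL k)).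
have LsfP : forall k, dec [:: m.+1] (pos k) (pos k.+1) (Lsf k).
  move=> k; exact: (proj2_sig (constructive_indefinite_description _ (HL k))).
have poslt : forall k, olt (pos k) (pos k.+1).
  by move=> k; rewrite posS; apply: olt_oadd_l.
have Lsfn : forall k, Lsf k <> [::].
  move=> k E; have := LsfP k; rewrite E /= => E'.
  by have := poslt k; rewrite -E' olt_irr.
pose step (s : nat * seq (seq nat)) :=
  match s.2 with _ :: ((_ :: _) as r) => (s.1, r) | _ => (s.1.+1, Lsf s.1.+1) end.
pose S := fix S j := match j with 0 => (0, Lsf 0) | j'.+1 => step (S j') end.
pose ln j := head [::] (S j).2.
pose st := fix st j := match j with 0 => a | j'.+1 => oadd (st j') (ln j') end.
have stS : forall j, st j.+1 = oadd (st j) (ln j) by [].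
have SS : forall j, S j.+1 = step (S j) by [].
have inv : forall j, [/\ (S j).2 <> [::], dec [:: m.+1] (st j) (pos (S j).1.+1) (S j).2,
   cnf (st j) & ~~ olt (st j) (pos (S j).1)].
  elim=> [|j [IH1 IH2 IH3 IH4]].
    by split => //; [exact: Lsfn | exact: LsfP | rewrite olt_irr].
  rewrite SS stS /ln; case E: (S j) IH1 IH2 IH3 IH4 => [k r] /=.
  case: r E => [//|L r] E _ [hL nL _ _ D] h3 h4.
  case: r E D => [|L' r'] E D /=.
  - move: D => /= ->; split; [exact: Lsfn | exact: LsfP | exact: hpos | by rewrite olt_irr].
  - split => //; first exact: cnf_oadd.
    exact: ole_trans h4 (ole_oadd_l _ h3).
have hcs : forall j, cnf (st j) by move=> j; have [] := inv j.
have pieceP : forall j, [/\ cnf (ln j), ln j <> [::], olt (ln j) [:: m.+1] &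
    indecomposable le (piece (st j) (ln j))].
  move=> j; have [] := inv j; rewrite /ln; case: (S j).2 => [//|L r] _ /= [] //.
have hcl : forall j, cnf (ln j) by move=> j; have [] := pieceP j.
have hn : forall j, ln j <> [::] by move=> j; have [] := pieceP j.
pose E := oadd a [:: m.+1].
have posE : forall k, olt (pos k) E.
  move=> k; apply: olt_oadd2 => //; exact: nseq_lt.
have stE : forall j, olt (st j) E.
  move=> j; have [I1 I2 I3 I4] := inv j.
  have [_ H] := dec_lt I3 I2; apply: olt_trans (H I1) (posE _).
have progress : forall r j, size (S j).2 <= r -> exists j', (S j).1 < (S j').1.
  elim=> [|r IH] j; first by case: (inv j); case: (S j).2.
  case E1: (S j) => [k rr] /= hs.
  case: rr E1 hs => [|L rr] E1 hs.
    by exists j.+1; rewrite SS E1.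
  case: rr E1 hs => [|L' rr] E1 hs.
    by exists j.+1; rewrite SS E1.
  have [j' Hj'] := IH j.+1 (ltac:(by rewrite SS E1)).

  by exists j'; move: Hj'; rewrite SS E1.
have unb : forall K, exists j, K <= (S j).1.
  elim=> [|K [j Hj]]; first by exists 0.
  have [j' Hj'] := progress _ j (leqnn _).
  by exists j'; apply: leq_ltn_trans Hj Hj'.
have hcof : forall x, cnf x -> olt x E -> exists j, olt x (st j).
  move=> x hx xE; case: (boolP (olt x a)) => xa; first by exists 0.
  have [hq Eq] := osubK ha hx xa.
  set q := osub x a in hq Eq.
  have qm : olt q [:: m.+1] by apply: (@oadd_lt_cancel a) => //; rewrite Eq.
  have [j Hj] := unb (size q).+1.
  exists j; have [_ _ _ I4] := inv j.
  apply: olt_le_trans I4; rewrite -Eq; apply: olt_le_trans (olt_oadd2 ha (olt_nseq_bound hq qm)) _.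
  exact: ole_oadd2 ha (nseq_mono _ Hj).
have hiF : forall j, iF le [:: n] (piece (st j) (ln j)).
  move=> j; have [h1 h2 h3 h4] := pieceP j; split => //; split; first by [].
  split; last by exists l => i _; exact: Hf.
  rewrite olt_single in h3 *; case/orP: h3 => [/eqP E0|h3]; first by rewrite E0.
  rewrite /= olt_single; apply/orP; right; exact: leq_trans h3 mn.
have [N good] := @good_tail (fun j => piece (st j) (ln j)) hiF (fun j i => Hf _).
have aN : ~~ olt (st N) a.
  have := @st_le st ln hcs stS hn 0 N (leq0n _); done.
have [hp Ep] := osubK ha (hcs N) aN.
set p := osub (st N) a in hp Ep.
have pm : olt p [:: m.+1] by apply: (@oadd_lt_cancel a) => //; rewrite Ep.
exists p; split => //; rewrite Ep.
apply: (@omega_ind st ln E) => //.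
by rewrite -Ep oaddA // oadd_oexp.
Qed.

Lemma AB m : m <= n -> forall e, e <= m -> Ap e /\ Bp e.
Proof.
elim: m => [|m IH] mn e em.
  move: em; rewrite leqn0 => /eqP->; split; first exact: A0.
  by apply: B_of_A => // e'; rewrite leqn0 => /eqP->; exact: A0.
have IH' := IH (ltnW mn).
case: (leqP e m) => em'; first exact: IH'.
have -> : e = m.+1 by apply/eqP; rewrite eqn_leq em em'.
have Am : Ap m.+1 by apply: A_step => //; exact: (IH' m (leqnn m)).2.
split => //; apply: B_of_A.
  by move=> e'; rewrite leq_eqVlt => /orP[/eqP->|e'm] //; apply: (IH' e' _).1.
by move=> e' e'm; apply: (IH' e' _).2.
Qed.
End Core.

Lemma inIn (X : eqType) (s : seq X) x : x \in s -> List.In x s.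
Proof. elim: s => //= y s IH; rewrite in_cons => /orP[/eqP->|h]; [by left | right; exact: IH]. Qed.

Lemma In_nth (X : Type) (t0 : X) (l : list X) q : List.In q l -> exists i, i < size l /\ nth t0 l i = q.
Proof.
elim: l => //= a l IH [->|H]; first by exists 0.
by have [i [h1 h2]] := IH H; exists i.+1.
Qed.

Lemma transfer (n : nat) :
  (forall (P : finType) (r : P -> P -> Prop), quasi_order r ->
     wqo_on (embeds r) (iF r (oexp n))) ->
  forall (Q : Type) (le : Q -> Q -> Prop), quasi_order le ->
  forall (l : list Q) (t0 : Q) (x : nat -> tseq Q), (forall k, iF le [:: n] (x k)) ->
  (forall k i, List.In (Defs.tval (x k) i) l) -> exists i j, i < j /\ embeds le (x i) (x j).
Proof.
move=> HP Q le [qr qt] l t0 x Hx Hl.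
pose L' := t0 :: l.
pose P := 'I_(size L').
pose nthP (k : P) := nth t0 L' k.
have idxE : forall q, exists k : P, List.In q l -> nthP k = q.
  move=> q; case: (classic (List.In q l)) => H; last by exists ord0.
  have [i [h1 h2]] := In_nth t0 H.
  have h1' : i.+1 < size L' by [].
  by exists (Ordinal h1').
pose idx q := proj1_sig (constructive_indefinite_description _ (idxE q)).
have idxP : forall q, List.In q l -> nthP (idx q) = q.
  move=> q; exact: (proj2_sig (constructive_indefinite_description _ (idxE q))).
pose r (i j : P) := le (nthP i) (nthP j).
have qoP : quasi_order r.
  by split; [move=> i; apply: qr | move=> i j k; apply: qt].
pose y k := TSeq (tlen (x k)) (fun i => idx (Defs.tval (x k) i)).
have HyF : forall k, iF r (oexp n) (y k).
  move=> k; have [[[h1 h2] [h3 h4]] Hind] := Hx k.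
  split; first split => //; first split => //.
    exists (ord_enum (size L')) => i _; apply: inIn; exact: mem_ord_enum.
  move=> d g hd hg dn gn E; have [F [F1 F2 F3]] := Hind d g hd hg dn gn E.
  exists F; split => // i hi; rewrite /r /= !idxP //; exact: F3.
have [i [j [ij [F [F1 F2 F3]]]]] := HP P r qoP y HyF.
exists i, j; split => //; exists F; split => // a ha.
by have := F3 a ha; rewrite /r /= !idxP.
Qed.

Lemma indec_ext (Q : Type) (le : Q -> Q -> Prop) (s t : tseq Q) :
  tlen s = tlen t -> (forall i, inlen (tlen s) i -> Defs.tval s i = Defs.tval t i) ->
  indecomposable le s -> indecomposable le t.
Proof.
move=> E H Hs d g hd hg dn gn Edg.
have [F [F1 F2 F3]] := Hs d g hd hg dn gn (etrans Edg (esym E)).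
exists F; split => //; first by move=> i; rewrite -E; apply: F1.
  by move=> i j; rewrite -E; apply: F2.
move=> i; rewrite -E => hi /=; rewrite -!H //.
- exact: F3.
- rewrite -(etrans Edg (esym E)); apply: inlen_oadd => //; exact: F1.
Qed.

Section Dec.
Variables (Q : Type) (le : Q -> Q -> Prop) (f : seq nat -> Q).

Fixpoint pcs (a : seq nat) (Ls : seq (seq nat)) : list (tseq Q) :=
  match Ls with
  | [::] => nil
  | L :: Ls' => cons (piece f a L) (pcs (oadd a L) Ls')
  end.

Lemma dec_concat b Ls : forall a e (u : tseq Q), cnf a -> cnf e -> e <> [::] ->
  dec le f b a (oadd a e) Ls -> tlen u = e ->
  (forall i, inlen e i -> Defs.tval u i = f (oadd a i)) -> concat_list u (pcs a Ls).
Proof.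
elim: Ls => [|L Ls IH] a e u ha he en /=.
  by move=> E; exfalso; apply: en; apply: (@oadd_inj a) => //; rewrite -E.
case=> hL nL Lb HL D Eu Hu.
case: Ls IH D => [|L2 Ls] IH D.
  have E : L = e by apply: (@oadd_inj a) => //; rewrite D.
  move: Eu Hu; rewrite -E => Eu Hu; split => // i; rewrite Eu; exact: Hu.
have [_ H] := dec_lt (cnf_oadd ha hL) D.
have Le : olt L e by apply: (@oadd_lt_cancel a) => //; exact: H.
have [he' Ee] := osubK hL he (olt_asym Le).
set e' := osub e L in he' Ee.
have e'n : e' <> [::] by move=> E0; move: Le; rewrite -Ee E0 olt_irr.
change (exists t, wf t /\ concat_eq u (piece f a L) t /\ concat_list t (pcs (oadd a L) (L2 :: Ls))).
exists (piece f (oadd a L) e'); split; first by split.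
split.
  split.
  - by rewrite Eu /= Ee.
  - move=> i /andP[hi iL]; apply: Hu; rewrite /inlen hi /=; exact: olt_trans iL Le.
  - move=> g hg /=; rewrite Hu; first by rewrite oaddA.
    by rewrite -Ee; apply: inlen_oadd.
apply: (IH _ e') => //; first exact: cnf_oadd.
by rewrite oaddA // Ee.
Qed.

Lemma dec_forall n a c Ls (l : list Q) : (forall i, List.In (f i) l) ->
  dec le f [:: n] a c Ls -> List.Forall (iF le [:: n]) (pcs a Ls).
Proof.
move=> Hf; elim: Ls a => [|L Ls IH] a /=; first by constructor.
case=> hL nL Lb HL D; constructor; last exact: IH.
split => //; split; first by split.
split => //; by exists l => i _; exact: Hf.
Qed.
End Dec.

Theorem proposition4p22 (n : nat) :
  (forall (P : finType) (r : P -> P -> Prop), quasi_order r ->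
     wqo_on (embeds r) (iF r (oexp n))) ->
  forall (Q : Type) (le : Q -> Q -> Prop), quasi_order le ->
    (forall s : tseq Q, sFeq (oexp n) s ->
       iFeq le (oexp n) s \/
       exists s0 s1, [/\ sF (oexp n) s0, iFeq le (oexp n) s1 & concat_eq s s0 s1])
    /\
    (forall s : tseq Q, sF (oexp n.+1) s ->
       exists ss : list (tseq Q),
         concat_list s ss /\ List.Forall (iF le (oexp n.+1)) ss).
Proof.
move=> HP Q le qo; split.
- move=> s [[hcs nes] [Els [l Hl]]].
  pose f i := if inlen (tlen s) i then Defs.tval s i else Defs.tval s [::].
  have v0 : inlen (tlen s) [::] by rewrite Els.
  have Hf : forall i, List.In (f i) l.
    by move=> i; rewrite /f; case: ifP => [h|_]; apply: Hl.
  have HW := @transfer n HP Q le qo l (Defs.tval s [::]).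
  have [A _] := AB Hf HW (leqnn n) (leqnn n).
  have [p [hp pn Hind]] := A [::] (erefl true).
  rewrite oadd_nil_l in Hind.
  case: (eqVneq p [::]) => [p0 | pn0].
  + left; subst p; split; first by split; [split | split => //; exists l].
    apply: indec_ext Hind => //=.
    by move=> i hi; rewrite oadd_nil_l /f Els hi.
  + right; exists (TSeq p (Defs.tval s)), (piece f p [:: n]); split.
    * split; first by split => //; apply/eqP.
      split => //; exists l => i /andP[hi ip]; apply: Hl.
      by rewrite Els /inlen hi /=; exact: olt_trans ip _.
    * split => //; split; first by split.
      split => //; exists l => i _; exact: Hf.
    * split => //; first by rewrite Els /= -[RHS]/(oadd p [:: n]) oadd_oexp.
      move=> g hg /=; rewrite /f ifT //; rewrite Els /oexp -(oadd_oexp hp pn); exact: inlen_oadd.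
- move=> s [[hcs nes] [Els [l Hl]]].
  pose f i := if inlen (tlen s) i then Defs.tval s i else Defs.tval s [::].
  have v0 : inlen (tlen s) [::] by rewrite /inlen /=; case: (tlen s) nes.
  have Hf : forall i, List.In (f i) l.
    by move=> i; rewrite /f; case: ifP => [h|_]; apply: Hl.
  have HW := @transfer n HP Q le qo l (Defs.tval s [::]).
  have [_ B] := AB Hf HW (leqnn n) (leqnn n).
  have [Ls D] := B [::] (tlen s) (erefl true) hcs Els.
  exists (pcs f [::] Ls); split; last exact: dec_forall Hf D.
  apply: (dec_concat (a := [::]) (e := tlen s) (u := s) (erefl true) hcs nes D) => //.
  by move=> i hi; rewrite oadd_nil_l /f hi.
Qed.
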